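(* For every integer $k \geq 1$, let $\mathcal{b}(k)$ denote the greatest common divisor of all the sums $\sum_{i=1}^{k} b_{n+i}$, $n \geq 0$. Then $$\mathcal{b}(k) = \begin{cases} \gcd(P_k, k), & \text{if } k \text{ is even};\\ 2\gcd(Q_k, k), & \text{if } k \text{ is odd}.\end{cases}$$
   Context: The Pell sequence $(P_n)_{n\ge0}$ is defined by $P_0=0$, $P_1=1$, $P_n = 2P_{n-1}+P_{n-2}$. The associated Pell sequence $(Q_n)_{n\ge0}$ is defined by $Q_0=1$, $Q_1=1$, $Q_n=2Q_{n-1}+Q_{n-2}$. The cobalancing sequence $(b_n)_{n\ge0}$ is defined by $b_0=0$, $b_1=0$, $b_n=6b_{n-1}-b_{n-2}+2$. *)

(* Defs.v *)
From mathcomp Require Import all_boot.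
Set Implicit Arguments. Unset Strict Implicit. Unset Printing Implicit Defensive.

Fixpoint pell (n : nat) : nat :=
  match n with
  | 0 => 0
  | 1 => 1
  | (m.+1 as m1).+1 => 2 * pell m1 + pell m
  end.

Fixpoint qpell (n : nat) : nat :=
  match n with
  | 0 => 1
  | 1 => 1
  | (m.+1 as m1).+1 => 2 * qpell m1 + qpell m
  end.

(* cobalancing numbers b_0 = 0, b_1 = 0, b_n = 6 b_(n-1) - b_(n-2) + 2
   (the sequence is nondecreasing, so truncated subtraction is harmless;
    we nonetheless write it as 6 b_(n-1) + 2 - b_(n-2)) *)
Fixpoint cobal (n : nat) : nat :=
  match n with
  | 0 => 0
  | 1 => 0
  | (m.+1 as m1).+1 => 6 * cobal m1 + 2 - cobal m
  end.

Definition cobal_window (k n : nat) : nat := \sum_(1 <= i < k.+1) cobal (n + i).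

Definition is_gcd_family (f : nat -> nat) (d : nat) : Prop :=
  (forall n, d %| f n) /\ (forall e, (forall n, e %| f n) -> e %| d).

(* Main.v *)
Require Import Defs.
From mathcomp Require Import all_boot zify.
Set Implicit Arguments. Unset Strict Implicit. Unset Printing Implicit Defensive.


Lemma pellSS n : pell n.+2 = 2 * pell n.+1 + pell n. Proof. by []. Qed.
Lemma qpellSS n : qpell n.+2 = 2 * qpell n.+1 + qpell n. Proof. by []. Qed.

Lemma pq_step n : pell n.+1 = pell n + qpell n /\ qpell n.+1 = qpell n + 2 * pell n.
Proof.
elim: n => [|n [IH1 IH2]]; first by [].
rewrite pellSS qpellSS IH1 IH2; lia.
Qed.
Lemma pellS n : pell n.+1 = pell n + qpell n. Proof. by case: (pq_step n). Qed.
Lemma qpellS n : qpell n.+1 = qpell n + 2 * pell n. Proof. by case: (pq_step n). Qed.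

Lemma pq_add a b : pell (a + b) = pell a * qpell b + qpell a * pell b /\
   qpell (a + b) = qpell a * qpell b + 2 * (pell a * pell b).
Proof.
elim: b => [|b [IH1 IH2]]; first by rewrite addn0 /=; lia.
rewrite addnS !pellS !qpellS IH1 IH2.
split; nia.
Qed.

Lemma cassini b : if odd b then qpell b ^ 2 + 1 = 2 * pell b ^ 2
                  else qpell b ^ 2 = 2 * pell b ^ 2 + 1.
Proof.
elim: b => [|b IH]; first by [].
rewrite pellS qpellS /=; case: (odd b) IH => /= IH; nia.
Qed.

Lemma qpell_odd n : odd (qpell n).
Proof. elim: n => [|n IH] //; by rewrite qpellS oddD oddM /= IH. Qed.

Lemma pell_odd n : odd (pell n) = odd n.
Proof. elim: n => [|n IH] //; rewrite pellS oddD IH qpell_odd /=; by case: (odd n). Qed.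

Lemma coprime_q n : coprime (qpell n) (qpell n.+1).
Proof.
elim: n => [|n IH] //. rewrite /coprime qpellSS gcdnMDl gcdnC. exact: IH.
Qed.

Lemma coprime_p n : coprime (pell n) (pell n.+1).
Proof.
elim: n => [|n IH] //. rewrite /coprime pellSS gcdnMDl gcdnC. exact: IH.
Qed.


Lemma pell4 m : pell m.+4 + pell m = 6 * pell m.+2.
Proof. rewrite !pellSS; lia. Qed.

Lemma cobal_pell n : 2 * cobal n.+1 + 1 = pell (n.*2.+1).
Proof.
suff: 2 * cobal n.+1 + 1 = pell (n.*2.+1) /\ 2 * cobal n.+2 + 1 = pell (n.*2.+3) by case.
elim: n => [|n [IH1 IH2]]; first by [].
split; first by rewrite doubleS.
rewrite doubleS.
have h4 := pell4 (n.*2.+1).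
have hm : pell (n.*2.+1) <= pell (n.*2.+3) by rewrite (pellSS n.*2.+1); lia.
have -> : cobal n.+3 = 6 * cobal n.+2 + 2 - cobal n.+1 by [].
lia.
Qed.

Lemma window_closed k n :
  4 * cobal_window k n + 2 * k + pell (n.*2) = pell (n.*2 + k.*2).
Proof.
rewrite /cobal_window.
elim: k => [|k IH]; first by rewrite big_geq // /= !addn0 muln0.
have -> : \sum_(1 <= i < k.+2) cobal (n+i) = \sum_(1 <= i < k.+1) cobal (n+i) + cobal (n + k.+1) by rewrite big_nat_recr.
rewrite mulnDr.
have -> : n.*2 + k.+1.*2 = (n.*2 + k.*2).+2 by rewrite doubleS !addnS.
rewrite pellSS -IH -doubleD.
have h := cobal_pell (n + k). rewrite -addnS in h. lia.
Qed.

Lemma key c b : pell (c + b + b) =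
  if odd b then pell c + 2 * (pell (c + b) * qpell b)
  else pell c + 2 * (qpell (c + b) * pell b).
Proof.
have [h1 h2] := pq_add (c + b) b.
have [h3 h4] := pq_add c b.
have hc := cassini b.
rewrite h1; case: (odd b) hc => hc; rewrite h3 h4.
- have e : pell c * (qpell b ^ 2 + 1) = pell c * (2 * pell b ^ 2) by rewrite hc.
  nia.
- have e : pell c * qpell b ^ 2 = pell c * (2 * pell b ^ 2 + 1) by rewrite hc.
  nia.
Qed.


Definition XX k := if odd k then qpell k else pell k.
Definition YY k j := if odd k then pell j else qpell j.

Lemma YYSS k j : YY k j.+2 = 2 * YY k j.+1 + YY k j.
Proof. by rewrite /YY; case: (odd k). Qed.

Lemma window_prod k n : 2 * cobal_window k n + k = XX k * YY k (n.*2 + k).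
Proof.
have h := window_closed k n.
have h2 := key n.*2 k.
rewrite -(addnn k) addnA h2 /XX /YY in h.
rewrite /XX /YY; case: (odd k) h => h; nia.
Qed.

Lemma window_step k n : cobal_window k n.+1 = cobal_window k n + XX k * YY k (n.*2 + k).+1.
Proof.
have h1 := window_prod k n.
have h2 := window_prod k n.+1.
rewrite (_ : n.+1.*2 + k = (n.*2 + k).+2) in h2; last by rewrite doubleS.
rewrite YYSS in h2. nia.
Qed.

Lemma two_adic n : 0 < n -> exists t u v, [/\ odd u, odd v, n = 2^t * u & pell n = 2^t * v].
Proof.
elim/ltn_ind: n => n IH n0.
case on: (odd n).
  by exists 0, n, (pell n); rewrite pell_odd on !mul1n.
have [m hm] : exists m, n = m.*2.
  by exists n./2; rewrite -[LHS](odd_double_half n) on.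
have m0 : 0 < m by lia.
have [t [u [v [ou ov hu hv]]]] := IH m (ltac:(lia)) m0.
exists t.+1, u, (v * qpell m); split => //.
- by rewrite oddM ov qpell_odd.
- rewrite hm hu expnS; lia.
- have [h1 _] := pq_add m m.
  rewrite hm -addnn h1 hv expnS. nia.
Qed.

Lemma pell4' m : pell m.+4 = pell m + 4 * (3 * pell m.+1 + pell m).
Proof. rewrite !pellSS; lia. Qed.
Lemma qpell4' m : qpell m.+4 = qpell m + 4 * (3 * qpell m.+1 + qpell m).
Proof. rewrite !qpellSS; lia. Qed.

Lemma mod4_aux n : [/\ pell (4 * n).+1 %% 4 = 1, pell (4 * n).+3 %% 4 = 1,
   qpell (4 * n).+1 %% 4 = 1 & qpell (4 * n).+3 %% 4 = 3].
Proof.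
elim: n => [|n [h1 h2 h3 h4]]; first by [].
have e1 : (4 * n.+1).+1 = ((4 * n).+1).+4 by lia.
have e3 : (4 * n.+1).+3 = ((4 * n).+3).+4 by lia.
rewrite e3 e1 pell4' qpell4' pell4' qpell4'.
by split; rewrite -modnDmr modnMr addn0.
Qed.

Lemma pell_mod4 j : odd j -> pell j %% 4 = 1.
Proof.
move=> oj. rewrite (divn_eq j 4).
have : j %% 4 = 1 \/ j %% 4 = 3.
  have := ltn_pmod j (isT : 0 < 4). have := odd_mod j (erefl : odd 4 = false). 
  move=> h; rewrite oj in h. move: h. case: (j %% 4) => [|[|[|[|]]]] //=; lia.
case=> ->; rewrite mulnC; by case: (mod4_aux (j %/ 4)) => a b c d; rewrite ?addn1 ?addn3.
Qed.

Lemma qpell_mod4 k : odd k -> qpell k %% 4 = k %% 4.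
Proof.
move=> ok. rewrite {1}(divn_eq k 4).
have : k %% 4 = 1 \/ k %% 4 = 3.
  have := ltn_pmod k (isT : 0 < 4). have := odd_mod k (erefl : odd 4 = false). 
  move=> h; rewrite ok in h. move: h. case: (k %% 4) => [|[|[|[|]]]] //=; lia.
case=> ->; rewrite mulnC; by case: (mod4_aux (k %/ 4)) => a b c d; rewrite ?addn1 ?addn3.
Qed.


Lemma oddE x : odd x -> x = 2 * x./2 + 1.
Proof. move=> h; have := odd_double_half x; rewrite h -muln2; lia. Qed.

Lemma t3 D a b S: 2 * S + D * (2 * b + 1) = D * (2 * a + 1) -> S + D * b = D * a.
Proof. move=> h. rewrite !mulnDr !muln1 in h. nia. Qed.

Lemma step_dvd k e n : (forall n, e %| cobal_window k n) ->
  e %| XX k * YY k (n.*2 + k).+1.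
Proof.
move=> he; have := he n.+1; rewrite window_step dvdn_addr //.
Qed.

Lemma even_case k : 1 <= k -> ~~ odd k ->
  is_gcd_family (cobal_window k) (gcdn (pell k) k).
Proof.
move=> k1 ek.
have eX : XX k = pell k by rewrite /XX (negbTE ek).
have eY : forall j, YY k j = qpell j by move=> j; rewrite /YY (negbTE ek).
split.
- move=> n. have hp := window_prod k n. rewrite eX eY in hp.
  have [t [u [v [ou ov hu hv]]]] := two_adic k1.
  set w := gcdn u v.
  have -> : gcdn (pell k) k = 2^t * w by rewrite hv hu -muln_gcdr gcdnC.
  have hu' : u = u %/ w * w by rewrite divnK // dvdn_gcdl.
  have hv' : v = v %/ w * w by rewrite divnK // dvdn_gcdr.
  set u' := u %/ w in hu'. set v' := v %/ w in hv'.
  have ou' : odd u' by move: ou; rewrite hu' oddM; case/andP.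
  have ov' : odd v' by move: ov; rewrite hv' oddM; case/andP.
  have oY : odd (v' * qpell (n.*2 + k)) by rewrite oddM ov' qpell_odd.
  have ha := oddE oY. have hb := oddE ou'.
  set a := _./2 in ha. set b := u'./2 in hb.
  set D := 2 ^ t * w.
  have hk : k = D * u' by rewrite hu hu' /D -mulnA (mulnC w) mulnA.
  have hP : pell k = D * v' by rewrite hv hv' /D -mulnA (mulnC w) mulnA.
  have hp2 : 2 * cobal_window k n + D * u' = D * (v' * qpell (n.*2+k)) by rewrite -hk mulnA -hP.
  rewrite ha hb in hp2.
  have hs : cobal_window k n + D * b = D * a by exact: t3 hp2.
  apply/dvdnP; exists (a - b). rewrite mulnBl; lia.
- move=> e he.
  have h1 : e %| pell k * qpell k.+1 by have := step_dvd 0 he; rewrite eX eY; apply.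
  have h2 : e %| pell k * qpell k.+3 by have := step_dvd 1 he; rewrite eX eY; apply.
  have cq : coprime (qpell k.+1) (qpell k.+3).
    rewrite /coprime (qpellSS k.+1) gcdnDr Gauss_gcdl; last exact: coprime_q.
    by rewrite -/(coprime _ 2) coprimen2 qpell_odd.
  have hX : e %| pell k.
    have : e %| gcdn (pell k * qpell k.+1) (pell k * qpell k.+3) by rewrite dvdn_gcd h1 h2.
    by rewrite -muln_gcdr (eqP cq) muln1.
  rewrite dvdn_gcd hX /=.
  have h0 := window_prod k 0. rewrite eX eY in h0.
  have : e %| 2 * cobal_window k 0 + k by rewrite h0 dvdn_mulr.
  by rewrite dvdn_addr // dvdn_mull.
Qed.


Lemma t4 S K X Y : 2 * S + K = X * Y -> K %% 4 = X %% 4 -> Y %% 4 = 1 -> 2 %| S.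
Proof.
move=> h hx hy; move: h.
move: (divn_eq K 4) (divn_eq X 4) (divn_eq Y 4). rewrite -hx hy.
move: (K %/ 4) (X %/ 4) (Y %/ 4) (K %% 4) => b a c r -> -> -> h.
apply/dvdnP; exists (4 * a * c + a + r * c - b). nia.
Qed.

Lemma odd_case k : odd k ->
  is_gcd_family (cobal_window k) (2 * gcdn (qpell k) k).
Proof.
move=> ok.
have eX : XX k = qpell k by rewrite /XX ok.
have eY : forall j, YY k j = pell j by move=> j; rewrite /YY ok.
split.
- move=> n. have hp := window_prod k n. rewrite eX eY in hp.
  set g := gcdn (qpell k) k.
  have og : odd g.
    have : g %| k := dvdn_gcdr _ _.
    by case/dvdnP=> q hq; move: ok; rewrite hq oddM; case/andP.
  have cg : coprime 2 g by rewrite coprime_sym coprimen2.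
  rewrite Gauss_dvd // ; apply/andP; split.
  + have hX := qpell_mod4 ok.
    have hY := pell_mod4 (_ : odd (n.*2 + k)).
    rewrite oddD odd_double ok in hY. have {}hY := hY isT.
    apply: t4 hp _ hY. by rewrite hX.
  + rewrite -(Gauss_dvdr _ (_ : coprime g 2)); last by rewrite coprimen2.
    have : g %| qpell k * pell (n.*2 + k) by rewrite dvdn_mulr // dvdn_gcdl.
    by rewrite -hp dvdn_addl // dvdn_gcdr.
- move=> e he.
  have h1 : e %| qpell k * pell k.+1 by have := step_dvd 0 he; rewrite eX eY; apply.
  have h2 : e %| qpell k * pell k.+3 by have := step_dvd 1 he; rewrite eX eY; apply.
  have cq : gcdn (pell k.+1) (pell k.+3) = 2.
    rewrite (pellSS k.+1) gcdnDr Gauss_gcdl; last exact: coprime_p.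
    apply/gcdn_idPr; by rewrite dvdn2 pell_odd /= ok.
  have hX : e %| qpell k * 2.
    have : e %| gcdn (qpell k * pell k.+1) (qpell k * pell k.+3) by rewrite dvdn_gcd h1 h2.
    by rewrite -muln_gcdr cq.
  have h0 := window_prod k 0. rewrite eX eY in h0.
  have : e %| 2 * (2 * cobal_window k 0 + k).
    by rewrite h0 mulnA (mulnC 2) dvdn_mulr.
  rewrite mulnDr dvdn_addr; last by rewrite mulnA dvdn_mull.
  move=> h2k. rewrite muln_gcdr dvdn_gcd h2k andbT mulnC //.
Qed.

Theorem theorem28 (k : nat) : 1 <= k ->
  is_gcd_family (cobal_window k)
    (if ~~ odd k then gcdn (pell k) k else 2 * gcdn (qpell k) k).
Proof.
move=> k1; case ok: (odd k) => /=.
- exact: odd_case.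
- by apply: even_case => //; rewrite ok.
Qed.
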